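(* For all types $A$ and $B$, if $A \equiv B$, then $A \simeq B$.
   Context: Types and rows share one grammar: $A,B,C,\rho ::= X \mid \alpha \mid \star \mid \iota \mid A\to B \mid \forall X{:}K.\,A \mid [\rho] \mid \langle\rho\rangle \mid \cdot \mid \ell{:}A;\rho$, where $X$ ranges over type variables (bound by $\forall$), $\alpha$ over type names, $\star$ is the dynamic type (also serving as the dynamic row), $\iota$ over base types, $[\rho]$ and $\langle\rho\rangle$ are record and variant types, $\cdot$ is the empty row, $\ell$ ranges over labels, and $K\in\{\mathsf T,\mathsf R\}$ is a kind. Types are identified up to renaming of bound variables; $\mathit{ftv}(A)$ is the set of free type variables. Row matching $\rho \triangleright_\ell A,\rho'$ is defined by: $(\ell{:}A;\rho)\triangleright_\ell A,\rho$; if $\ell'\neq\ell$ and $\rho\triangleright_\ell A,\rho'$ then $(\ell'{:}B;\rho)\triangleright_\ell A,(\ell'{:}B;\rho')$; and $\star\triangleright_\ell \star,\star$. $\mathbf{QPoly}(A)$ holds iff $A$ is not of the form $\forall X{:}K.\,B$ and $\star$ occurs in $A$. Type equivalence $\equiv$ is the least equivalence relation that is a congruence for $\to$, $\forall X{:}K.\,-$, $[-]$, $\langle-\rangle$ and $\ell{:}-;-$, and contains $\ell{:}A;\ell'{:}B;\rho \equiv \ell'{:}B;\ell{:}A;\rho$ whenever $\ell\neq\ell'$. Consistency $\simeq$ is defined inductively: $A\simeq A$; $\star\simeq A$; $A\simeq\star$; $A_1\to A_2\simeq B_1\to B_2$ if $A_1\simeq B_1$ and $A_2\simeq B_2$;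 $\forall X{:}K.A\simeq\forall X{:}K.B$ if $A\simeq B$; $\forall X{:}K.A\simeq B$ if $\mathbf{QPoly}(B)$, $X\notin\mathit{ftv}(B)$ and $A\simeq B$; $A\simeq\forall X{:}K.B$ if $\mathbf{QPoly}(A)$, $X\notin\mathit{ftv}(A)$ and $A\simeq B$; $[\rho_1]\simeq[\rho_2]$ and $\langle\rho_1\rangle\simeq\langle\rho_2\rangle$ if $\rho_1\simeq\rho_2$; $\ell{:}A;\rho_1\simeq B$ if $B\triangleright_\ell B',\rho_2$, $A\simeq B'$ and $\rho_1\simeq\rho_2$; $A\simeq \ell{:}B;\rho_2$ if $A\triangleright_\ell A',\rho_1$, $A'\simeq B$ and $\rho_1\simeq\rho_2$. *)

(* Defs.v *)
(* Types/rows of the gradual row-polymorphic calculus,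
   with type variables X in de Bruijn representation (so that types are
   identified up to renaming of bound variables syntactically). *)
From Stdlib Require Import Arith.

Inductive kind : Type := KT | KR.

Definition label := nat.
Definition tname := nat.
Definition base := nat.

Inductive ty : Type :=
  | TVar : nat -> ty
  | TName : tname -> ty
  | TDyn : ty                       (* star (dynamic type / dynamic row) *)
  | TBase : base -> ty
  | TArr : ty -> ty -> ty
  | TForall : kind -> ty -> ty      (* forall X:K. A  (binds index 0) *)
  | TRec : ty -> ty
  | TVariant : ty -> ty
  | TEmpty : ty
  | TExt : label -> ty -> ty -> ty.

Fixpoint shift (c : nat) (A : ty) : ty :=
  match A with
  | TVar n => if c <=? n then TVar (S n) else TVar n
  | TName a => TName a
  | TDyn => TDyn
  | TBase i => TBase i
  | TArr A1 A2 => TArr (shift c A1) (shift c A2)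
  | TForall K A1 => TForall K (shift (S c) A1)
  | TRec r => TRec (shift c r)
  | TVariant r => TVariant (shift c r)
  | TEmpty => TEmpty
  | TExt l A1 r => TExt l (shift c A1) (shift c r)
  end.

Fixpoint in_ftv (n : nat) (A : ty) : Prop :=
  match A with
  | TVar m => m = n
  | TArr A1 A2 => in_ftv n A1 \/ in_ftv n A2
  | TForall _ A1 => in_ftv (S n) A1
  | TRec r | TVariant r => in_ftv n r
  | TExt _ A1 r => in_ftv n A1 \/ in_ftv n r
  | _ => False
  end.

Fixpoint dyn_occurs (A : ty) : Prop :=
  match A with
  | TDyn => True
  | TArr A1 A2 => dyn_occurs A1 \/ dyn_occurs A2
  | TForall _ A1 => dyn_occurs A1
  | TRec r | TVariant r => dyn_occurs r
  | TExt _ A1 r => dyn_occurs A1 \/ dyn_occurs r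
  | _ => False
  end.

Definition is_forall (A : ty) : Prop :=
  match A with TForall _ _ => True | _ => False end.

Definition QPoly (A : ty) : Prop := ~ is_forall A /\ dyn_occurs A.

Inductive row_match : ty -> label -> ty -> ty -> Prop :=
  | RM_here : forall l A r, row_match (TExt l A r) l A r
  | RM_there : forall l l' A B r r',
      l' <> l -> row_match r l A r' ->
      row_match (TExt l' B r) l A (TExt l' B r')
  | RM_dyn : forall l, row_match TDyn l TDyn TDyn.

Inductive ty_equiv : ty -> ty -> Prop :=
  | E_refl : forall A, ty_equiv A A
  | E_sym : forall A B, ty_equiv A B -> ty_equiv B A
  | E_trans : forall A B C, ty_equiv A B -> ty_equiv B C -> ty_equiv A C
  | E_arr : forall A1 A2 B1 B2,
      ty_equiv A1 B1 -> ty_equiv A2 B2 -> ty_equiv (TArr A1 A2) (TArr B1 B2)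
  | E_forall : forall K A B, ty_equiv A B -> ty_equiv (TForall K A) (TForall K B)
  | E_rec : forall r1 r2, ty_equiv r1 r2 -> ty_equiv (TRec r1) (TRec r2)
  | E_variant : forall r1 r2, ty_equiv r1 r2 -> ty_equiv (TVariant r1) (TVariant r2)
  | E_ext : forall l A B r1 r2,
      ty_equiv A B -> ty_equiv r1 r2 -> ty_equiv (TExt l A r1) (TExt l B r2)
  | E_swap : forall l l' A B r,
      l <> l' -> ty_equiv (TExt l A (TExt l' B r)) (TExt l' B (TExt l A r)).

(* In the forall-vs-QPoly rules, the named rule
   "forall X:K.A ~ B if QPoly B, X notin ftv(B), A ~ B" becomes, in
   de Bruijn form, "A ~ shift 0 B" (B weakened under the binder; the
   freshness side condition is then automatic). *)
Inductive consistent : ty -> ty -> Prop :=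
  | C_refl : forall A, consistent A A
  | C_dynL : forall A, consistent TDyn A
  | C_dynR : forall A, consistent A TDyn
  | C_arr : forall A1 A2 B1 B2,
      consistent A1 B1 -> consistent A2 B2 ->
      consistent (TArr A1 A2) (TArr B1 B2)
  | C_forall : forall K A B, consistent A B ->
      consistent (TForall K A) (TForall K B)
  | C_forallL : forall K A B, QPoly B -> consistent A (shift 0 B) ->
      consistent (TForall K A) B
  | C_forallR : forall K A B, QPoly A -> consistent (shift 0 A) B ->
      consistent A (TForall K B)
  | C_rec : forall r1 r2, consistent r1 r2 -> consistent (TRec r1) (TRec r2)
  | C_variant : forall r1 r2, consistent r1 r2 ->
      consistent (TVariant r1) (TVariant r2)
  | C_extL : forall l A r1 B B' r2,
      row_match B l B' r2 -> consistent A B' -> consistent r1 r2 ->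
      consistent (TExt l A r1) B
  | C_extR : forall l A A' r1 B r2,
      row_match A l A' r1 -> consistent A' B -> consistent r1 r2 ->
      consistent A (TExt l B r2).

Notation "A ≡ B" := (ty_equiv A B) (at level 70).
Notation "A ≃ B" := (consistent A B) (at level 70).

(* Main.v *)
Require Import Defs.

Definition shape_rel (A B : ty) : Prop :=
  match A, B with
  | TVar n, TVar m => n = m
  | TName n, TName m => n = m
  | TBase n, TBase m => n = m
  | TDyn, TDyn => True
  | TEmpty, TEmpty => True
  | TArr a1 a2, TArr b1 b2 => a1 ≡ b1 /\ a2 ≡ b2
  | TForall K a, TForall K' b => K = K' /\ a ≡ b
  | TRec a, TRec b => a ≡ b
  | TVariant a, TVariant b => a ≡ b
  | TExt _ _ _, TExt _ _ _ => True
  | _, _ => False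
  end.

Lemma shape_of_equiv : forall A B, A ≡ B -> shape_rel A B.
Proof.
  intros A B H; induction H; simpl.
  - destruct A; simpl; auto using E_refl.
  - destruct A, B; simpl in *; intuition (subst; auto using E_sym).
  - destruct A, B, C; simpl in *; intuition (subst; eauto using E_trans).
  - auto.
  - auto.
  - auto.
  - auto.
  - auto.
  - auto.
Qed.

Definition match_pres (B C : ty) : Prop :=
  forall l B' r2, row_match B l B' r2 ->
    exists C' r3, row_match C l C' r3 /\ B' ≡ C' /\ r2 ≡ r3.

Lemma match_of_equiv : forall B C, B ≡ C -> match_pres B C /\ match_pres C B.
Proof.
  intros B C H; induction H; unfold match_pres in *.
  - split; intros; eexists; eexists; eauto using E_refl.
  - tauto.
  - destruct IHty_equiv1 as [H1 H1'], IHty_equiv2 as [H2 H2'].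
    split; intros l X r HM.
    + destruct (H1 _ _ _ HM) as (X1 & r1 & HM1 & E1 & E1').
      destruct (H2 _ _ _ HM1) as (X2 & r2 & HM2 & E2 & E2').
      exists X2, r2; eauto using E_trans.
    + destruct (H2' _ _ _ HM) as (X1 & r1 & HM1 & E1 & E1').
      destruct (H1' _ _ _ HM1) as (X2 & r2 & HM2 & E2 & E2').
      exists X2, r2; eauto using E_trans.
  - split; intros; inversion H1.
  - split; intros; inversion H0.
  - split; intros; inversion H0.
  - split; intros; inversion H0.
  - destruct IHty_equiv2 as [H2 H2'].
    split; intros l0 X r HM; inversion HM; subst.
    + exists B, r2; repeat split; auto using RM_here.
    + destruct (H2 _ _ _ ltac:(eassumption)) as (X1 & r3 & HM1 & E1 & E1').
      exists X1, (TExt l B r3); repeat split; auto using RM_there, E_ext.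
    + exists A, r1; repeat split; auto using RM_here, E_sym.
    + destruct (H2' _ _ _ ltac:(eassumption)) as (X1 & r3 & HM1 & E1 & E1').
      exists X1, (TExt l A r3); repeat split; auto using RM_there, E_ext, E_sym.
  - split; intros l0 X r0 HM;
    repeat match goal with Hm : row_match (TExt _ _ _) _ _ _ |- _ => inversion Hm; subst; clear Hm end;
    eexists; eexists; repeat split;
    eauto using RM_here, RM_there, E_refl, E_swap.
Qed.

Theorem mainTheorem5 : forall A B : ty, A ≡ B -> A ≃ B.
Proof.
  intro A; induction A; intros C HE;
    pose proof (shape_of_equiv _ _ HE) as HS;
    destruct C; simpl in HS; try contradiction; try (subst; apply C_refl).
  all: try (destruct HS; subst; constructor; auto; fail).
  all: try (constructor; auto; fail).
  destruct (proj1 (match_of_equiv _ _ HE) _ _ _ (RM_here _ _ _))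
    as (X & r & HM & E1 & E2).
  eapply C_extL; eauto.
Qed.
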